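(* Let $(\Omega,\mathcal F,\mathbb P)$ be a probability space with filtration $\{\mathcal F_n\}_{n\ge0}$, let $\{X_n\}_{n\ge0}$ be a supermartingale adapted to $\{\mathcal F_n\}$, and let $\kappa$ be a stopping time w.r.t. $\{\mathcal F_n\}$. Suppose there exist positive reals $b_1,b_2,c_1,c_2,c_3$ with $c_2>c_3$ such that (A1) $\mathbb P(\kappa>n)\le c_1e^{-c_2 n}$ for all sufficiently large $n\in\mathbb N$, and (A2) for all $n\in\mathbb N$, $|X_{n+1}-X_n|\le b_1 n^{b_2}e^{c_3 n}$ almost surely. Then $\mathbb E(|X_\kappa|)<\infty$ and $\mathbb E(X_\kappa)\le\mathbb E(X_0)$.
   Context: A supermartingale is an adapted process with $\mathbb E|X_n|<\infty$ and $\mathbb E(X_{n+1}\mid\mathcal F_n)\le X_n$ a.s. for all $n$. A stopping time is a random variable $\kappa:\Omega\to\mathbb N\cup\{\infty\}$ with $\{\kappa\le n\}\in\mathcal F_n$ for all $n$. *)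

(* Defs.v *)
From HB Require Import structures.
From mathcomp Require Import all_boot all_order all_algebra.
From mathcomp Require Import all_classical all_reals all_analysis.
Set Implicit Arguments. Unset Strict Implicit. Unset Printing Implicit Defensive.
Import Order.TTheory GRing.Theory Num.Theory.
Local Open Scope classical_set_scope.
Local Open Scope ring_scope.

Section Defs.
Context {d : measure_display} {T : measurableType d} {R : realType}.

Definition filtration (F : nat -> set (set T)) : Prop :=
  (forall n, sigma_algebra setT (F n)) /\
  (forall n, F n `<=` measurable) /\
  (forall m n, (m <= n)%N -> F m `<=` F n).

Definition measurable_wrt (G : set (set T)) (Y : T -> R) : Prop :=
  forall B : set R, measurable B -> G (Y @^-1` B).

Definition adapted (F : nat -> set (set T)) (X : nat -> T -> R) : Prop :=
  forall n, measurable_wrt (F n) (X n).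

Definition cond_exp_version (P : probability T R) (G : set (set T))
    (Z Y : T -> R) : Prop :=
  measurable_wrt G Y /\ P.-integrable setT (EFin \o Y) /\
  forall A, G A -> (\int[P]_(x in A) (Y x)%:E = \int[P]_(x in A) (Z x)%:E)%E.

Definition supermartingale (P : probability T R) (F : nat -> set (set T))
    (X : nat -> T -> R) : Prop :=
  adapted F X /\
  (forall n, P.-integrable setT (EFin \o X n)) /\
  (forall n, exists Y, cond_exp_version P (F n) (X n.+1) Y /\
       {ae P, forall w, Y w <= X n w}).

(* stopping times with values in N ∪ {∞}; None encodes ∞ *)
Definition stopping_time (F : nat -> set (set T)) (kappa : T -> option nat)
  : Prop :=
  forall n, F n [set w | exists2 m, kappa w = Some m & (m <= n)%N].

Definition st_gt (kappa : T -> option nat) (n : nat) : set T :=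
  [set w | match kappa w with None => True | Some m => (n < m)%N end].

(* the stopped value X_kappa; on the event {kappa = ∞} (which is
   P-null under the hypotheses of the theorem) it is set to 0 *)
Definition stopped (X : nat -> T -> R) (kappa : T -> option nat) : T -> R :=
  fun w => match kappa w with Some m => X m w | None => 0 end.

End Defs.

(* Main.v *)
Require Import Defs.
From HB Require Import structures.
From mathcomp Require Import all_boot all_order all_algebra.
From mathcomp Require Import all_classical all_reals all_analysis.
From mathcomp Require Import measurable_realfun.
From mathcomp Require Import ring lra.
Import numFieldNormedType.Exports.
Import Order.TTheory GRing.Theory Num.Theory.
Local Open Scope classical_set_scope.
Local Open Scope ring_scope.

Section Aux.
Context d (T : measurableType d) (R : realType) (P : probability T R)
  (F : nat -> set (set T)) (X : nat -> T -> R) (kappa : T -> option nat).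
Hypotheses (hF : filtration F) (hX : supermartingale P F X)
  (hk : stopping_time F kappa).

Definition Le n := [set w | exists2 m, kappa w = Some m & (m <= n)%N].

Lemma mLe n : measurable (Le n).
Proof. by apply: hF.2.1; apply: hk. Qed.

Lemma st_gtE n : st_gt kappa n = ~` Le n.
Proof.
apply/seteqP; split => w; rewrite /st_gt /Le /=; case: (kappa w) => [m|] /=.
- by move=> hm [m' [<-]]; rewrite leqNgt hm.
- by move=> _ [m' ].
- move=> H; rewrite ltnNge; apply/negP => hm; by apply: H; exists m.
- by [].
Qed.

Lemma mA n : measurable (st_gt kappa n).
Proof. by rewrite st_gtE; apply: measurableC; exact: mLe. Qed.

Lemma FA n : F n (st_gt kappa n).
Proof.
rewrite st_gtE -setTD; have [_ + _] := hF.1 n; apply; exact: hk.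
Qed.

Lemma mX n : measurable_fun setT (X n).
Proof.
move=> _ B mB; rewrite setTI; apply: hF.2.1; exact: hX.1.
Qed.

Lemma iX n : P.-integrable setT (EFin \o X n).
Proof. exact: hX.2.1. Qed.

Local Open Scope ereal_scope.

Definition Dn n (w : T) : R := (X n.+1 w - X n w)%R.
Definition fn n (w : T) : R := (\1_(st_gt kappa n) w * Dn n w)%R.

Lemma mDn n : measurable_fun setT (Dn n).
Proof. by apply: measurable_funB; exact: mX. Qed.

Lemma mfn n : measurable_fun setT (fn n).
Proof. apply: measurable_funM; [exact: measurable_indic (mA n)| exact: mDn]. Qed.

Lemma iDn n : P.-integrable setT (EFin \o Dn n).
Proof.
have := integrableB measurableT (iX n.+1) (iX n).
by apply: eq_integrable => // x _; rewrite /Dn /= EFinB.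
Qed.

Lemma fn_le n x : (`|fn n x| <= `|Dn n x|)%R.
Proof.
rewrite /fn indicE; case: (x \in st_gt kappa n) => /=.
  by rewrite mul1r.
by rewrite mul0r normr0.
Qed.

Lemma ifn n : P.-integrable setT (EFin \o fn n).
Proof.
apply: (le_integrable _ _ _ (iDn n)) => //.
  by apply/measurable_EFinP; exact: mfn.
by move=> x _ /=; rewrite lee_fin; exact: fn_le.
Qed.

Lemma fnE n : (EFin \o fn n) = ((EFin \o Dn n) \_ (st_gt kappa n)).
Proof.
apply/funext => x; rewrite /patch /= /fn indicE.
by case: (x \in st_gt kappa n) => /=; rewrite ?mul1r ?mul0r.
Qed.

Lemma int_fn_le0 n : \int[P]_x (fn n x)%:E <= 0.
Proof.
have -> : \int[P]_x (fn n x)%:E = \int[P]_(x in st_gt kappa n) (Dn n x)%:E.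
  rewrite [RHS]integral_mkcond; apply: eq_integral => x _.
  by have := congr1 (fun g => g x) (fnE n).
have mAn := mA n.
have iS k : P.-integrable (st_gt kappa n) (EFin \o X k).
  by apply: (integrableS measurableT) => //; exact: iX.
rewrite (eq_integral (fun x => (X n.+1 x)%:E - (X n x)%:E)); last first.
  by move=> x _; rewrite /Dn EFinB.
rewrite (integralB mAn (iS n.+1) (iS n)) sube_le0.
have [Y [[mY [iY hY]] ae]] := hX.2.2 n.
rewrite -(hY _ (FA n)).
have mYf : measurable_fun setT Y.
  by move=> _ B mB; rewrite setTI; apply: hF.2.1; exact: mY.
have iYA : P.-integrable (st_gt kappa n) (EFin \o Y).
  by apply: (integrableS measurableT) => //.
case: ae => N [mN PN0 sub].
rewrite (negligible_integral mN mAn iYA PN0).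
rewrite [leRHS](negligible_integral mN mAn (iS n) PN0).
apply: le_integral; first exact: measurableD.
- by apply: (integrableS mAn (measurableD mAn mN) _ iYA) => x [].
- by apply: (integrableS mAn (measurableD mAn mN) _ (iS n)) => x [].
- move=> x; rewrite inE => -[_ Nx]; rewrite /= lee_fin.
  by case: (boolP (Y x <= X n x)%R) => // /negP h; exfalso; apply: Nx; apply: sub.
Qed.

Definition SN N (w : T) : R := (X 0 w + \sum_(n < N) fn n w)%R.

Lemma SN_S N w : SN N.+1 w = (SN N w + fn N w)%R.
Proof. by rewrite /SN big_ord_recr addrA. Qed.

Lemma SN_Some w m N : kappa w = Some m -> SN N w = X (minn m N) w.
Proof.
move=> km; elim: N => [|N IH]; first by rewrite /SN big_ord0 addr0 minn0.
rewrite SN_S IH /fn indicE; case: (ltnP N m) => hNm.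
- have -> : (w \in st_gt kappa N) = true by apply/mem_set; rewrite /st_gt /= km.
  rewrite ?(minn_idPr hNm) /Dn /= ?mulr1n mul1r.
  by rewrite addrC subrK.
- have -> : (w \in st_gt kappa N) = false.
    by apply/negbTE/negP; rewrite inE /st_gt /= km ltnNge hNm.
  rewrite ?(minn_idPl hNm) ?(minn_idPl (leqW hNm)) /= mul0r.
  by rewrite addr0.
Qed.

Lemma mSN N : measurable_fun setT (SN N).
Proof.
apply: measurable_funD; first exact: mX.
by apply: measurable_sum => n; exact: mfn.
Qed.

Lemma iSN N : P.-integrable setT (EFin \o SN N).
Proof.
elim: N => [|N IH].
  by apply: eq_integrable (iX 0) => // x _; rewrite /SN /= big_ord0 addr0.
have := integrableD measurableT IH (ifn N).
by apply: eq_integrable => // x _; rewrite /= SN_S EFinD.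
Qed.

Lemma int_SN_le N : \int[P]_x (SN N x)%:E <= \int[P]_x (X 0 x)%:E.
Proof.
elim: N => [|N IH].
  by rewrite le_eqVlt; apply/orP; left; apply/eqP; apply: eq_integral => x _;
    rewrite /SN big_ord0 addr0.
rewrite (eq_integral (fun x => (SN N x)%:E + (fn N x)%:E)); last first.
  by move=> x _; rewrite SN_S EFinD.
rewrite (integralD measurableT (iSN N) (ifn N)).
apply: le_trans IH; rewrite -[leRHS]adde0; apply: leeD => //.
exact: int_fn_le0.
Qed.

Definition Nn := [set w | kappa w = None].

Lemma NnE : Nn = \bigcap_n st_gt kappa n.
Proof.
apply/seteqP; split => w /=.
  by move=> E n _; rewrite /st_gt /= E.
case E: (kappa w) => [m|] // H.
by have := H m I; rewrite /st_gt /= E ltnn.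
Qed.

Lemma mNn : measurable Nn.
Proof. by rewrite NnE; apply: bigcap_measurableType => k _; exact: mA. Qed.

Lemma mstopped : measurable_fun setT (stopped X kappa).
Proof.
pose h N w := (SN N w * \1_(~` Nn) w)%R.
apply: (measurable_fun_cvg (h := h)).
  move=> N; apply: measurable_funM; first exact: mSN.
  by apply: measurable_indic; apply: measurableC; exact: mNn.
move=> x _; rewrite /h /stopped indicE.
case E: (kappa x) => [m|].
- have -> : (x \in ~` Nn) = true by apply/mem_set => /=; rewrite /Nn /= E.
  apply: cvg_near_cst; exists m => // N /= hN.
  by rewrite (SN_Some _ _ _ E) (minn_idPl hN) /= ?mulr1n mulr1.
- have -> : (x \in ~` Nn) = false.
    by apply/negbTE/negP; rewrite inE /= /Nn /= E.
  apply: cvg_near_cst; apply: nearW => N /=.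
  by rewrite mulr0.
Qed.

Lemma main_cond : P Nn = 0 ->
  \sum_(n <oo) \int[P]_x (`|fn n x|%R)%:E < +oo ->
  P.-integrable setT (EFin \o stopped X kappa) /\
  \int[P]_x (stopped X kappa x)%:E <= \int[P]_x (X 0 x)%:E.
Proof.
move=> PN0 sumfin.
pose g x := (`|X 0 x|%R)%:E + \sum_(n <oo) (`|fn n x|%R)%:E.
have mabs k : measurable_fun setT (fun x => (`|fn k x|%R)%:E).
  apply/(@measurable_EFinP _ _ _ setT (fun x => `|fn k x|%R)).
  apply: measurableT_comp => //; exact: mfn.
have mX0 : measurable_fun setT (fun x => (`|X 0 x|%R)%:E).
  apply/(@measurable_EFinP _ _ _ setT (fun x => `|X 0 x|%R)).
  apply: measurableT_comp => //; exact: mX.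
have msum : measurable_fun setT (fun x => \sum_(n <oo) (`|fn n x|%R)%:E).
  by apply: ge0_emeasurable_sum => // k x _ _.
have mg : measurable_fun setT g by exact: emeasurable_funD.
have g0 x : 0 <= g x.
  by apply: adde_ge0 => //; apply: nneseries_ge0 => n _ _.
have ig : P.-integrable setT g.
  apply/integrableP; split => //.
  rewrite (eq_integral g); last by move=> x _; rewrite gee0_abs.
  rewrite /g ge0_integralD //; last by move=> x _; apply: nneseries_ge0 => n _ _.
  rewrite integral_nneseries //.
  apply: lte_add_pinfty => //.
  by have /integrableP[_] := iX 0.
have f_g : {ae P, forall x n, setT x -> `|(SN n x)%:E| <= g x}.
  apply: aeW => x n _; rewrite abse_EFin /g.
  apply: (@le_trans _ _ ((`|X 0 x|)%:E + \sum_(k < n) (`|fn k x|%R)%:E)).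
    rewrite sumEFin -EFinD lee_fin /SN.
    apply: (le_trans (ler_normD _ _)); rewrite lerD2l.
    exact: ler_norm_sum.
  apply: leeD => //.
  rewrite -(big_mkord xpredT (fun k => (`|fn k x|%R)%:E)).
  by apply: nneseries_lim_ge.
have f_f : {ae P, forall x, setT x ->
    (fun N => (SN N x)%:E) @ \oo --> (stopped X kappa x)%:E}.
  exists Nn; split => //; first exact: mNn.
  move=> x /= Hx; case E: (kappa x) => [m|] //; exfalso; apply: Hx => _.
  apply: cvg_near_cst; exists m => // N /= hN.
  by rewrite (SN_Some _ _ _ E) (minn_idPl hN) /stopped E.
have mf_ N : measurable_fun setT (EFin \o SN N).
  by apply/measurable_EFinP; exact: mSN.
have mf : measurable_fun setT (EFin \o stopped X kappa).
  by apply/measurable_EFinP; exact: mstopped.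
have [istop _ cvg] := dominated_convergence measurableT mf_ mf f_f ig f_g.
split => //.
rewrite -(cvg_lim _ cvg) //.
apply: lime_le; first exact: cvgP cvg.
by apply: nearW => N; exact: int_SN_le.
Qed.

Lemma int_fn_bound n (M : R) : {ae P, forall w, (`|X n.+1 w - X n w| <= M)%R} ->
  (0 <= M)%R -> \int[P]_x (`|fn n x|%R)%:E <= M%:E * P (st_gt kappa n).
Proof.
move=> hae M0.
have -> : \int[P]_x (`|fn n x|%R)%:E =
    \int[P]_(x in st_gt kappa n) (`|Dn n x|%R)%:E.
  rewrite [RHS]integral_mkcond; apply: eq_integral => x _.
  rewrite /patch /fn indicE; case: (x \in st_gt kappa n) => /=.
    by rewrite ?mulr1n mul1r.
  by rewrite mul0r normr0.
rewrite -(integral_cst _ (mA n)).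
apply: ae_ge0_le_integral => //.
- exact: mA.
- apply/(@measurable_EFinP _ _ _ _ (fun x => `|Dn n x|%R)).
  apply: measurableT_comp => //.
  exact: measurable_funS (mDn n).
- case: hae => N [mN PN sub]; exists N; split => // x /= hx.
  by apply: sub => /= h; apply: hx => _; rewrite lee_fin.
Qed.

End Aux.

Section Analysis.
Context (R : realType).
Local Open Scope ereal_scope.

Lemma geom_bound (a q : R) : (0 <= a)%R -> (0 < q)%R -> (q < 1)%R ->
  \sum_(i <oo) (a * q ^+ i)%:E <= (a / (1 - q))%:E.
Proof.
move=> a0 q0 q1; apply: lime_le.
  apply: is_cvg_nneseries => n _ _.
  by rewrite lee_fin mulr_ge0 // exprn_ge0 // ltW.
apply: nearW => n; rewrite sumEFin lee_fin.
have q1' : (`|q| < 1)%R by rewrite ger0_norm // ltW.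
have := geometric_le_lim n a0 q0 q1'.
by rewrite /series /=.
Qed.

Lemma poly_exp (b2 dl : R) k n : (0 < dl)%R -> (b2 <= k%:R)%R -> (0 < n)%N ->
  (n%:R `^ b2 * expR (- (dl * n%:R)) <=
   (k.+1)`!%:R / (dl / 2) ^+ k.+1 * expR (- (dl / 2)) ^+ n)%R.
Proof.
move=> d0 hb n0.
have n1 : (1 <= n%:R :> R)%R by rewrite ler1n.
have hA : (n%:R `^ b2 <= n%:R ^+ k.+1 :> R)%R.
  rewrite -powR_mulrn ?ler0n //; apply: ler_powR => //.
  by apply: (le_trans hb); rewrite ler_nat.
set x := (dl / 2 * n%:R)%R.
have x0 : (0 <= x)%R by rewrite mulr_ge0 // divr_ge0 // ltW.
have h2 := expR_ge1Dxn k x0.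
set f := ((k.+1)`!%:R : R).
have f0 : (0 < f)%R by rewrite ltr0n fact_gt0.
have c0 : (0 < (dl / 2) ^+ k.+1)%R by rewrite exprn_gt0 // divr_gt0.
have hB : (n%:R ^+ k.+1 <= f / (dl / 2) ^+ k.+1 * expR x)%R.
  have : (x ^+ k.+1 <= f * expR x)%R.
    rewrite -ler_pdivrMl // mulrC; apply: le_trans h2.
    by rewrite /f lerDr ler01.
  rewrite /x exprMn => h.
  rewrite [leRHS](_ : _ = ((f * expR x) / (dl / 2) ^+ k.+1)%R); last by rewrite mulrAC.
  by rewrite ler_pdivlMr // mulrC.
have hE : (expR x * expR (- (dl * n%:R)) = expR (- (dl / 2)) ^+ n)%R.
  rewrite -expRD -expRM_natl; congr expR; rewrite /x.
  by field.
apply: (le_trans (ler_wpM2r (expR_ge0 _) hA)).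
apply: (le_trans (ler_wpM2r (expR_ge0 _) hB)).
by rewrite -hE !mulrA.
Qed.

End Analysis.

Theorem theorem4p3 (d : measure_display) (T : measurableType d) (R : realType)
  (P : probability T R) (F : nat -> set (set T)) (X : nat -> T -> R)
  (kappa : T -> option nat) (b1 b2 c1 c2 c3 : R) :
  filtration F ->
  supermartingale P F X ->
  stopping_time F kappa ->
  0 < b1 -> 0 < b2 -> 0 < c1 -> 0 < c2 -> 0 < c3 -> c3 < c2 ->
  (exists N : nat, forall n : nat, (N <= n)%N ->
      (P (st_gt kappa n) <= (c1 * expR (- (c2 * n%:R)))%:E)%E) ->
  (forall n : nat, (0 < n)%N ->
      {ae P, forall w, `|X n.+1 w - X n w| <=
                       b1 * (n%:R `^ b2) * expR (c3 * n%:R)}) ->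
  P.-integrable setT (EFin \o stopped X kappa) /\
  (\int[P]_x (stopped X kappa x)%:E <= \int[P]_x (X 0%N x)%:E)%E.
Proof.
move=> hF hX hk b10 b20 c10 c20 c30 c32 [N hN] hD.
apply: (main_cond _ _ _ _ _ _ _ hF hX hk).
-
  apply/eqP; rewrite eq_le measure_ge0 andbT.
  apply/lee_addgt0Pr => e e0; rewrite add0e.
  pose n := maxn N (Num.trunc (c1 / (c2 * e))).+1.
  have hT := truncnS_gt (c1 / (c2 * e)).
  have hn : ((Num.trunc (c1 / (c2 * e))).+1%:R <= n%:R :> R).
    by rewrite ler_nat leq_maxr.
  have hc1 : c1 < c2 * e * n%:R.
    have := lt_le_trans hT hn; rewrite ltr_pdivrMr ?mulr_gt0 // => h.
    nra.
  have hex := expR_ge1Dx (c2 * n%:R).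
  apply: (le_trans (le_measure _ _ _ _)).
  - by rewrite inE; exact: (mNn _ _ _ _ hF hk).
  - by rewrite inE; exact: (mA _ _ _ _ hF hk n).
  - by move=> w /= E; rewrite /st_gt /= E.
  apply: (le_trans (hN n (leq_maxl _ _))); rewrite lee_fin.
  rewrite expRN ler_pdivrMr ?expR_gt0 //.
  nra.
-
  set dl := c2 - c3.
  have dl0 : 0 < dl by rewrite subr_gt0.
  pose k := (Num.trunc b2).+1.
  have hk' : b2 <= k%:R by apply: ltW; exact: truncnS_gt.
  pose q := expR (- (dl / 2)).
  have q0 : 0 < q by exact: expR_gt0.
  have q1 : q < 1 by rewrite expR_lt1 oppr_lt0 divr_gt0.
  pose C := (k.+1)`!%:R / (dl / 2) ^+ k.+1.
  have C0 : 0 <= C by rewrite divr_ge0 // exprn_ge0 // divr_ge0 // ltW.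
  pose K := b1 * c1 * C.
  have K0 : 0 <= K by rewrite mulr_ge0 // mulr_ge0 // ltW.
  pose a n := (\int[P]_x (`|fn d T R X kappa n x|)%:E)%E.
  have a0 n : (0 <= a n)%E by apply: integral_ge0 => x _.
  have afin n : (a n < +oo)%E.
    by have /integrableP[_ h] := ifn _ _ _ _ _ _ _ hF hX hk n.
  pose N0 := maxn N 1.
  have atail n : (N0 <= n)%N -> (a n <= (K * q ^+ n)%:E)%E.
    move=> hn.
    have n0 : (0 < n)%N by apply: leq_trans hn; rewrite leq_maxr.
    have nN : (N <= n)%N by apply: leq_trans hn; rewrite leq_maxl.
    pose M := b1 * (n%:R `^ b2) * expR (c3 * n%:R).
    have M0 : 0 <= M by rewrite mulr_ge0 ?expR_ge0 // mulr_ge0 ?powR_ge0 // ltW.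
    apply: (le_trans (int_fn_bound _ _ _ _ _ _ _ hF hX hk n M (hD n n0) M0)).
    have M0e : (0 <= M%:E)%E by rewrite lee_fin.
    apply: (le_trans (@lee_wpmul2l _ M%:E M0e _ _ (hN n nN))).
    rewrite -EFinM lee_fin /M.
    have hp := poly_exp _ _ _ k n dl0 hk' n0.
    have hE : expR (c3 * n%:R) * expR (- (c2 * n%:R)) = expR (- (dl * n%:R)).
      by rewrite -expRD; congr expR; rewrite /dl; ring.
    have -> : b1 * n%:R `^ b2 * expR (c3 * n%:R) * (c1 * expR (- (c2 * n%:R)))
        = b1 * c1 * (n%:R `^ b2 * (expR (c3 * n%:R) * expR (- (c2 * n%:R)))).
      by ring.
    rewrite hE.
    have -> : K * q ^+ n = b1 * c1 * (C * q ^+ n) by rewrite /K; ring.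
    by apply: ler_wpM2l => //; rewrite mulr_ge0 // ltW.
  have : (\sum_(n <oo) a n < +oo)%E; last by [].
  rewrite (nneseries_split 0 N0); last by move=> i _; exact: a0.
  apply: lte_add_pinfty.
    by apply: lte_sum_pinfty => i _; exact: afin.
  rewrite add0n -nneseries_addn; last by move=> i; exact: a0.
  apply: (le_lt_trans (lee_nneseries (v := fun i => ((K * q ^+ N0) * q ^+ i)%:E) _ _)).
  - by move=> i _ _; exact: a0.
  - move=> i _; rewrite -mulrA -exprD addnC; apply: atail.
    exact: leq_addr.
  have Ka : 0 <= K * q ^+ N0 by rewrite mulr_ge0 // exprn_ge0 // ltW.
  apply: (le_lt_trans (geom_bound _ _ _ Ka q0 q1)).
  exact: ltry.
Qed.
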